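(* Let $\mathcal H_S,\mathcal H_M$ be finite-dimensional complex Hilbert spaces and let $\Psi=\sum_{t\in D}\mu_t\,\phi_t\otimes\lambda_t$ be a unit vector in $\mathcal H_S\otimes\mathcal H_M$, with $D$ finite, unit vectors $\phi_t\in\mathcal H_S$, $\lambda_t\in\mathcal H_M$, and nonzero complex numbers $\mu_t$. (a) If the $\{\lambda_j\}_{j\in D}$ are orthonormal, then the $\{\phi_j\}_{j\in D}$ are fully distinguishable relative to $M$ (with witnessing family $b_j=\lambda_j$); explicitly $\Pr(q\mid\lambda_j)=|\langle q|\phi_j\rangle|^2$ for all unit $q\in\mathcal H_S$. (b) If the $\{\phi_j\}_{j\in D}$ are linearly independent and fully distinguishable relative to $M$, then the $\{\lambda_j\}_{j\in D}$ are orthonormal.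
   Context: For the pure joint state $\Psi$ with reduced states $\rho_S=\mathrm{Tr}_M|\Psi\rangle\langle\Psi|$, $\rho_M=\mathrm{Tr}_S|\Psi\rangle\langle\Psi|$, and unit vectors $q\in\mathcal H_S$, $b\in\mathcal H_M$: $\Pr(b)=\langle b|\rho_M|b\rangle$, $\Pr(q\wedge b)=|\langle q\otimes b|\Psi\rangle|^2$, $\Pr(q\mid b)=\Pr(q\wedge b)/\Pr(b)$ when $\Pr(b)>0$. The family $\{\phi_j\}_{j\in D}$ is fully distinguishable relative to $M$ iff there exists an orthonormal family $\{b_j\}_{j\in D}$ in $\mathcal H_M$ which is probability-complete, i.e. $\sum_{j\in D}\Pr(b_j)=1$, with $\Pr(b_j)>0$ and $\Pr(q\mid b_j)=|\langle q|\phi_j\rangle|^2$ for every $j\in D$ and every unit vector $q\in\mathcal H_S$. *)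

(* Defs.v *)
(* Finite-dimensional complex Hilbert spaces are modelled as
   C^n (column vectors 'cV[C]_n) with C := R[i], R : realType (so C = complex
   numbers when R = the reals).  The bipartite space H_S (x) H_M = C^n (x) C^m
   is modelled as n x m matrices: the elementary tensor phi (x) lam has
   entries phi_i * lam_k, i.e. it is phi *m lam^T. *)
From HB Require Import structures.
From mathcomp Require Import all_boot all_order all_algebra.
From mathcomp Require Import complex.
From mathcomp Require Import reals.
Set Implicit Arguments. Unset Strict Implicit. Unset Printing Implicit Defensive.
Import Order.TTheory GRing.Theory Num.Theory.
Local Open Scope ring_scope.
Local Open Scope complex_scope.

Section QM.
Variable R : realType.
Local Notation C := R[i].

Definition dotv n (u v : 'cV[C]_n) : C := \sum_(i < n) (u i 0)^* * v i 0.

Definition dotT n m (A B : 'M[C]_(n, m)) : C :=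
  \sum_(i < n) \sum_(k < m) (A i k)^* * B i k.

Definition tens n m (phi : 'cV[C]_n) (lam : 'cV[C]_m) : 'M[C]_(n, m) :=
  \matrix_(i, k) (phi i 0 * lam k 0).

Definition unit_vec n (u : 'cV[C]_n) : Prop := dotv u u = 1.
Definition unit_state n m (Psi : 'M[C]_(n, m)) : Prop := dotT Psi Psi = 1.

(* reduced state rho_M = Tr_S |Psi><Psi| : (rho_M)_{kl} = sum_i Psi_{ik} conj(Psi_{il}) *)
Definition rhoM n m (Psi : 'M[C]_(n, m)) : 'M[C]_m :=
  \matrix_(k, l) \sum_(i < n) Psi i k * (Psi i l)^*.

(* reduced state rho_S = Tr_M |Psi><Psi| *)
Definition rhoS n m (Psi : 'M[C]_(n, m)) : 'M[C]_n :=
  \matrix_(i, j) \sum_(k < m) Psi i k * (Psi j k)^*.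

Definition PrM n m (Psi : 'M[C]_(n, m)) (b : 'cV[C]_m) : C :=
  dotv b (rhoM Psi *m b).

Definition PrJ n m (Psi : 'M[C]_(n, m)) (q : 'cV[C]_n) (b : 'cV[C]_m) : C :=
  `|dotT (tens q b) Psi| ^+ 2.

Definition PrC n m (Psi : 'M[C]_(n, m)) (q : 'cV[C]_n) (b : 'cV[C]_m) : C :=
  PrJ Psi q b / PrM Psi b.

Definition orthonormal_fam (D : finType) n (f : D -> 'cV[C]_n) : Prop :=
  forall i j, dotv (f i) (f j) = (i == j)%:R.

Definition lin_indep (D : finType) n (f : D -> 'cV[C]_n) : Prop :=
  forall c : D -> C, \sum_(j : D) c j *: f j = 0 -> forall j, c j = 0.

Definition fd_witness (D : finType) n m (Psi : 'M[C]_(n, m))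
    (phi : D -> 'cV[C]_n) (b : D -> 'cV[C]_m) : Prop :=
  [/\ orthonormal_fam b,
      \sum_(j : D) PrM Psi (b j) = 1,
      forall j, 0 < PrM Psi (b j)
    & forall j (q : 'cV[C]_n), unit_vec q ->
        PrC Psi q (b j) = `|dotv q (phi j)| ^+ 2].

Definition fully_distinguishable (D : finType) n m (Psi : 'M[C]_(n, m))
    (phi : D -> 'cV[C]_n) : Prop :=
  exists b : D -> 'cV[C]_m, fd_witness Psi phi b.

End QM.

(* Main.v *)
Require Import Defs.
From HB Require Import structures.
From mathcomp Require Import all_boot all_order all_algebra.
From mathcomp Require Import complex.
From mathcomp Require Import reals.
From mathcomp Require Import ring.
Import Order.TTheory GRing.Theory Num.Theory.
Local Open Scope ring_scope.
Local Open Scope complex_scope.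

Section L.
Variable R : realType.
Local Notation C := R[i].

Lemma nconjE (x : C) : (x^*)%R = conjc x. Proof. by []. Qed.

Lemma dotvC n (u v : 'cV[C]_n) : dotv u v = (dotv v u)^*.
Proof. rewrite /dotv rmorph_sum; apply eq_bigr => i _; by rewrite rmorphM /= nconjE conjcK mulrC. Qed.

Lemma dotvDr n (u v w : 'cV[C]_n) : dotv u (v + w) = dotv u v + dotv u w.
Proof. rewrite /dotv -big_split; apply eq_bigr => i _; by rewrite mxE mulrDr. Qed.

Lemma dotvZr n (a : C) (u v : 'cV[C]_n) : dotv u (a *: v) = a * dotv u v.
Proof. rewrite /dotv mulr_sumr; apply eq_bigr => i _; by rewrite mxE mulrCA. Qed.

Lemma dotvNr n (u v : 'cV[C]_n) : dotv u (- v) = - dotv u v.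
Proof. by rewrite -scaleN1r dotvZr mulN1r. Qed.

Lemma dotvBr n (u v w : 'cV[C]_n) : dotv u (v - w) = dotv u v - dotv u w.
Proof. by rewrite dotvDr dotvNr. Qed.

Lemma dotvZl n (a : C) (u v : 'cV[C]_n) : dotv (a *: u) v = a^* * dotv u v.
Proof. by rewrite dotvC dotvZr rmorphM /= ?nconjE -dotvC. Qed.

Lemma dotvBl n (u v w : 'cV[C]_n) : dotv (v - w) u = dotv v u - dotv w u.
Proof. by rewrite dotvC dotvBr rmorphB /= ?nconjE -!dotvC. Qed.

Lemma dotv_eq0 n (u : 'cV[C]_n) : dotv u u = 0 -> u = 0.
Proof.
move=> H; apply/matrixP => i j; rewrite ord1 mxE.
have := @psumr_eq0P _ _ predT (fun i => (u i 0)^* * u i 0) _ H i isT.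
  move=> /(_ _)/eqP; rewrite mulf_eq0 conjc_eq0 orbb => /(_ _)/eqP; apply.
by move=> k _; rewrite mulrC mulcJ_ge0.
Qed.

Lemma dotT_eq0 n m (A : 'M[C]_(n, m)) : dotT A A = 0 -> A = 0.
Proof.
move=> H; apply/matrixP => i k; rewrite mxE.
have ge0 : forall i k, 0 <= (A i k)^* * A i k by move=> ? ?; rewrite mulrC mulcJ_ge0.
have H1 : \sum_(k < m) (A i k)^* * A i k = 0.
  apply: (@psumr_eq0P _ _ predT (fun i => \sum_(k < m) (A i k)^* * A i k) _ H i isT).
  by move=> j _; apply: sumr_ge0 => l _.
have /eqP := @psumr_eq0P _ _ predT (fun k => (A i k)^* * A i k) (fun l _ => ge0 i l) H1 k isT.
by rewrite mulf_eq0 conjc_eq0 orbb => /eqP.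
Qed.

Lemma dotTC n m (A B : 'M[C]_(n, m)) : dotT A B = (dotT B A)^*.
Proof.
rewrite /dotT rmorph_sum; apply eq_bigr => i _; rewrite rmorph_sum.
by apply eq_bigr => k _; rewrite rmorphM /= ?nconjE conjcK mulrC.
Qed.

Lemma dotTDr n m (A B B' : 'M[C]_(n, m)) : dotT A (B + B') = dotT A B + dotT A B'.
Proof.
rewrite /dotT -big_split; apply eq_bigr => i _; rewrite -big_split.
by apply eq_bigr => k _; rewrite mxE mulrDr.
Qed.

Lemma dotTDl n m (A B B' : 'M[C]_(n, m)) : dotT (B + B') A = dotT B A + dotT B' A.
Proof. by rewrite dotTC dotTDr rmorphD /= ?nconjE -!dotTC. Qed.

Lemma dotT0r n m (A : 'M[C]_(n, m)) : dotT A 0 = 0.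
Proof. rewrite /dotT big1 // => i _; rewrite big1 // => k _; by rewrite mxE mulr0. Qed.

Lemma dotT_sumr n m (D : finType) (A : 'M[C]_(n, m)) (F : D -> 'M[C]_(n, m)) :
  dotT A (\sum_t F t) = \sum_t dotT A (F t).
Proof.
apply: (big_ind2 (fun x y => dotT A x = y)) => //; first exact: dotT0r.
by move=> x1 x2 y1 y2 <- <-; rewrite dotTDr.
Qed.

Lemma dotT_suml n m (D : finType) (A : 'M[C]_(n, m)) (F : D -> 'M[C]_(n, m)) :
  dotT (\sum_t F t) A = \sum_t dotT (F t) A.
Proof.
rewrite dotTC dotT_sumr rmorph_sum; apply eq_bigr => t _; by rewrite /= ?nconjE -dotTC.
Qed.

Lemma dotTZr n m (a : C) (A B : 'M[C]_(n, m)) : dotT A (a *: B) = a * dotT A B.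
Proof.
rewrite /dotT mulr_sumr; apply eq_bigr => i _; rewrite mulr_sumr.
by apply eq_bigr => k _; rewrite mxE mulrCA.
Qed.

Lemma dotTZl n m (a : C) (A B : 'M[C]_(n, m)) : dotT (a *: A) B = a^* * dotT A B.
Proof. by rewrite dotTC dotTZr rmorphM /= ?nconjE -dotTC. Qed.

Lemma dotT_tens n m (a c : 'cV[C]_n) (b d : 'cV[C]_m) :
  dotT (tens a b) (tens c d) = dotv a c * dotv b d.
Proof.
rewrite /dotT /dotv mulr_suml; apply eq_bigr => i _; rewrite mulr_sumr.
apply eq_bigr => k _; rewrite !mxE rmorphM /= ?nconjE; ring.
Qed.

Lemma dotT_sums n m (D : finType) (x y : D -> C) (f h : D -> 'cV[C]_n)
   (g k : D -> 'cV[C]_m) :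
  dotT (\sum_s x s *: tens (f s) (g s)) (\sum_t y t *: tens (h t) (k t)) =
  \sum_s \sum_t (x s)^* * y t * (dotv (f s) (h t) * dotv (g s) (k t)).
Proof.
rewrite dotT_suml; apply: eq_bigr => s _; rewrite dotT_sumr.
by apply: eq_bigr => t _; rewrite dotTZl dotTZr dotT_tens !mulrA.
Qed.

Lemma sum_delta (D : finType) (F : D -> D -> C) :
  \sum_s \sum_t F s t * (s == t)%:R = \sum_s F s s.
Proof.
apply eq_bigr => s _; rewrite (bigD1 s) //= eqxx mulr1 big1 ?addr0 //.
by move=> t; rewrite eq_sym => /negbTE ->; rewrite mulr0.
Qed.

Lemma sum_delta1 (D : finType) n (F : D -> C) (phi : D -> 'cV[C]_n) j :
  \sum_t (F t * (j == t)%:R) *: phi t = F j *: phi j.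
Proof.
rewrite (bigD1 j) //= eqxx mulr1 big1 ?addr0 //.
by move=> t; rewrite eq_sym => /negbTE ->; rewrite mulr0 scale0r.
Qed.

Definition vb n m (b : 'cV[C]_m) (Psi : 'M[C]_(n, m)) : 'cV[C]_n :=
  \col_i \sum_(k < m) (b k 0)^* * Psi i k.
Arguments vb {n m}.

Lemma dotT_tens_vb n m (q : 'cV[C]_n) (b : 'cV[C]_m) Psi :
  dotT (tens q b) Psi = dotv q (vb b Psi).
Proof.
rewrite /dotT /dotv; apply eq_bigr => i _; rewrite !mxE mulr_sumr.
by apply eq_bigr => k _; rewrite mxE rmorphM /= ?nconjE mulrA.
Qed.

Lemma PrM_vb n m (b : 'cV[C]_m) (Psi : 'M[C]_(n, m)) :
  PrM Psi b = dotv (vb b Psi) (vb b Psi).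
Proof.
rewrite /PrM /dotv.
transitivity (\sum_(k < m) \sum_(l < m) \sum_(i < n)
                (b k 0)^* * (Psi i k * (Psi i l)^* * b l 0)).
  apply eq_bigr => k _; rewrite mxE mulr_sumr; apply eq_bigr => l _.
  by rewrite /rhoM mxE big_distrl big_distrr.
rewrite exchange_big /=.
transitivity (\sum_(l < m) \sum_(i < n) \sum_(k < m)
                (b k 0)^* * (Psi i k * (Psi i l)^* * b l 0)).
  by apply eq_bigr => l _; rewrite exchange_big.
rewrite exchange_big /=; apply eq_bigr => i _.
rewrite !mxE rmorph_sum /= big_distrl; apply eq_bigr => l _ /=.
rewrite big_distrr; apply eq_bigr => k _; rewrite rmorphM /= ?nconjE conjcK; ring.
Qed.

Lemma vb_expand n m (D : finType) (b : 'cV[C]_m) (mu : D -> C)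
   (phi : D -> 'cV[C]_n) (lam : D -> 'cV[C]_m) :
  vb b (\sum_t mu t *: tens (phi t) (lam t)) =
  \sum_t (mu t * dotv b (lam t)) *: phi t.
Proof.
apply/matrixP => i j; rewrite ord1 !mxE summxE.
under eq_bigr => k _ do rewrite summxE mulr_sumr.
rewrite exchange_big /=; apply eq_bigr => t _.
rewrite !mxE /dotv big_distrr /= big_distrl; apply eq_bigr => k _; rewrite !mxE; rewrite /=; ring.
Qed.

Lemma tensD n m (p : 'cV[C]_n) (x y : 'cV[C]_m) :
  tens p (x + y) = tens p x + tens p y.
Proof. by apply/matrixP => i k; rewrite !mxE mulrDr. Qed.

Lemma tensZ n m (p : 'cV[C]_n) (a : C) (x : 'cV[C]_m) :
  tens p (a *: x) = a *: tens p x.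
Proof. by apply/matrixP => i k; rewrite !mxE mulrCA. Qed.

Lemma dotT_sums0 n m (D : finType) (x y : D -> C) (f h : D -> 'cV[C]_n)
   (g k : D -> 'cV[C]_m) :
  (forall s t, dotv (g s) (k t) = 0) ->
  dotT (\sum_s x s *: tens (f s) (g s)) (\sum_t y t *: tens (h t) (k t)) = 0.
Proof.
move=> H; rewrite dotT_sums big1 // => s _; rewrite big1 // => t _.
by rewrite H !mulr0.
Qed.

Lemma dotT_orth n m (D : finType) (x : D -> C) (f : D -> 'cV[C]_n)
   (g : D -> 'cV[C]_m) :
  (forall s, dotv (f s) (f s) = 1) ->
  (forall s t, dotv (g s) (g t) = (s == t)%:R) ->
  dotT (\sum_s x s *: tens (f s) (g s)) (\sum_t x t *: tens (f t) (g t)) =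
  \sum_s (x s)^* * x s.
Proof.
move=> uf og; rewrite dotT_sums.
under eq_bigr => s _ do under eq_bigr => t _ do rewrite og mulrA.
by rewrite sum_delta; apply eq_bigr => s _; rewrite uf !mulr1.
Qed.

End L.
Arguments vb {R n m}.

Theorem lemmaA3 (R : realType) (n m : nat) (D : finType)
    (Psi : 'M[R[i]]_(n, m)) (mu : D -> R[i])
    (phi : D -> 'cV[R[i]]_n) (lam : D -> 'cV[R[i]]_m) :
  unit_state Psi ->
  Psi = \sum_(t : D) mu t *: tens (phi t) (lam t) ->
  (forall t, unit_vec (phi t)) ->
  (forall t, unit_vec (lam t)) ->
  (forall t, mu t != 0) ->
  (orthonormal_fam lam ->
     fully_distinguishable Psi phi /\ fd_witness Psi phi lam /\
     (forall j (q : 'cV[R[i]]_n), unit_vec q ->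
        PrC Psi q (lam j) = `|dotv q (phi j)| ^+ 2))
  /\
  (lin_indep phi -> fully_distinguishable Psi phi -> orthonormal_fam lam).
Proof.
move=> uPsi ePsi uphi ulam munz.
have uphi' : forall t, dotv (phi t) (phi t) = 1 := uphi.
have ulam' : forall t, dotv (lam t) (lam t) = 1 := ulam.
have uPsi' : dotT Psi Psi = 1 := uPsi.
split.
- move=> olam.
  have olam' : forall s t, dotv (lam s) (lam t) = (s == t)%:R := olam.
  have vbj : forall j, vb (lam j) Psi = mu j *: phi j.
    move=> j; rewrite ePsi vb_expand.
    under eq_bigr => t _ do rewrite olam'.
    exact: sum_delta1.
  have PrMj : forall j, PrM Psi (lam j) = (mu j)^* * mu j.
    by move=> j; rewrite PrM_vb vbj dotvZl dotvZr uphi' mulr1.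
  have pos : forall j, 0 < (mu j)^* * mu j.
    move=> j; rewrite lt0r mulf_neq0 ?conjC_eq0 ?munz //=.
    by rewrite mulrC mulcJ_ge0.
  have sum1 : \sum_j PrM Psi (lam j) = 1.
    under eq_bigr do rewrite PrMj.
    by rewrite -uPsi' ePsi dotT_orth.
  have cond : forall j (q : 'cV[R[i]]_n), unit_vec q ->
        PrC Psi q (lam j) = `|dotv q (phi j)| ^+ 2.
    move=> j q _; rewrite /PrC /PrJ dotT_tens_vb vbj dotvZr PrMj normrM exprMn.
    rewrite normCK [mu j * _]mulrC mulrAC divff ?mul1r //.
    exact: lt0r_neq0 (pos j).
  have wit : fd_witness Psi phi lam by split => // j; rewrite PrMj pos.
  by split; [exists lam | split].
- move=> li [b [ob sum1 pos cond]].
  have ob' : forall s t, dotv (b s) (b t) = (s == t)%:R := ob.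
  pose v := fun j => vb (b j) Psi.
  have PrMv : forall j, PrM Psi (b j) = dotv (v j) (v j) := fun j => @PrM_vb _ _ _ (b j) Psi.
  have vpar : forall j, v j = dotv (phi j) (v j) *: phi j.
    move=> j; set c := dotv (phi j) (v j).
    have h1 : PrJ Psi (phi j) (b j) = PrM Psi (b j).
      have := cond j (phi j) (uphi j); rewrite uphi' normr1 expr1n /PrC => h.
      by rewrite -(divfK (lt0r_neq0 (pos j)) (PrJ Psi (phi j) (b j))) h mul1r.
    have h2 : dotv (v j) (v j) = c * c^*.
      by rewrite -PrMv -h1 /PrJ dotT_tens_vb normCK.
    apply/eqP; rewrite -subr_eq0; apply/eqP/dotv_eq0.
    rewrite !dotvBl !dotvBr !dotvZl !dotvZr uphi' h2 -/c.
    rewrite [dotv (v j) (phi j)]dotvC -/c; ring.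
  have F : forall j t, j != t -> dotv (b j) (lam t) = 0.
    move=> j t jt.
    pose cf := fun s => mu s * dotv (b j) (lam s) - dotv (phi j) (v j) * (j == s)%:R.
    have key : \sum_s cf s *: phi s = 0.
      rewrite /cf; under eq_bigr do rewrite scalerBl.
      by rewrite sumrB sum_delta1 -vb_expand -ePsi -(vpar j) subrr.
    have /eqP := li cf key t.
    by rewrite /cf (negbTE jt) mulr0 subr0 mulf_eq0 (negbTE (munz t)) /= => /eqP.
  pose a := fun t => dotv (b t) (lam t).
  have vj : forall j, v j = (mu j * a j) *: phi j.
    move=> j; rewrite /v ePsi vb_expand (bigD1 j) //= big1 ?addr0 // => t tj.
    by rewrite F ?mulr0 ?scale0r // eq_sym.
  have sumPP : \sum_j (mu j * a j)^* * (mu j * a j) = 1.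
    rewrite -sum1; apply eq_bigr => j _.
    by rewrite PrMv vj dotvZl dotvZr uphi' mulr1.
  pose r := fun t => lam t - a t *: b t.
  have br : forall s t, dotv (b s) (r t) = 0.
    move=> s t; rewrite /r dotvBr dotvZr ob'.
    case: (eqVneq s t) => [<-|st]; first by rewrite mulr1 subrr.
    by rewrite F // mulr0 subr0.
  have PQ : Psi = \sum_t (mu t * a t) *: tens (phi t) (b t)
                + \sum_t mu t *: tens (phi t) (r t).
    rewrite ePsi -big_split; apply eq_bigr => t _ /=.
    have -> : lam t = a t *: b t + r t by rewrite /r addrC subrK.
    by rewrite tensD tensZ scalerDr scalerA.
  have QQ : dotT (\sum_t mu t *: tens (phi t) (r t))
                 (\sum_t mu t *: tens (phi t) (r t)) = 0.
    have h := uPsi'; rewrite PQ dotTDl !dotTDr dotT_orth // sumPP in h.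
    rewrite (@dotT_sums0 _ _ _ _ _ _ _ _ b r br) in h.
    rewrite (@dotT_sums0 _ _ _ _ _ _ _ _ r b) in h; last first.
      by move=> s t; rewrite dotvC br rmorph0.
    by apply: (addrI 1); rewrite addr0 -[RHS]h !add0r addr0.
  have Q0 := dotT_eq0 _ _ _ _ QQ.
  have r0 : forall t, r t = 0.
    move=> t; apply/matrixP => k z; rewrite ord1 [RHS]mxE.
    have key : \sum_s (mu s * r s k 0) *: phi s = 0.
      apply/matrixP => i z'; rewrite ord1 summxE [RHS]mxE.
      transitivity ((\sum_t mu t *: tens (phi t) (r t)) i k); last by rewrite Q0 mxE.
      by rewrite summxE; apply eq_bigr => s _; rewrite !mxE /=; ring.
    have /eqP := li _ key t.
    by rewrite mulf_eq0 (negbTE (munz t)) /= => /eqP.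
  have lamE : forall t, lam t = a t *: b t.
    by move=> t; apply/eqP; rewrite -subr_eq0; apply/eqP; exact: r0.
  move=> s t; case: (eqVneq s t) => [<-|st]; first by rewrite ulam'.
  by rewrite (lamE s) (lamE t) dotvZl dotvZr ob' (negbTE st) !mulr0.
Qed.
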